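(* Let $\|\cdot\|$ be a norm on $\mathbb{R}^d$ and $T:\mathbb{R}^d\to\mathbb{R}^d$ a contraction with parameter $\gamma\in(0,1)$, i.e. $\|Tx-Ty\|\le\gamma\|x-y\|$, with unique fixed point $x^*$. Let $(\beta_n)_{n\ge1}\subseteq(0,1)$ be increasing, $x^0\in\mathbb{R}^d$, and $(x^n)$ generated by $x^n=(1-\beta_n)x^0+\beta_n(Tx^{n-1}+U_n)$, $n\ge1$, for arbitrary random vectors $U_n$. Then for every $n\ge1$, $$\|x^n-x^*\|\le\sum_{i=0}^n\gamma^{n-i}B_{i+1}^n\bigl((1-\beta_i)\|x^0-x^*\|+\beta_i\|U_i\|\bigr).$$
   Context: Notation: $B_i^n:=\prod_{j=i}^n\beta_j$ with $B_i^n=1$ if $i>n$; convention $\beta_0=0$ (so the $i=0$ term equals $\gamma^nB_1^n\|x^0-x^*\|$). *)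

(* Defs.v *)
From HB Require Import structures.
From mathcomp Require Import all_boot all_order all_algebra.
From mathcomp Require Import reals.
Set Implicit Arguments. Unset Strict Implicit. Unset Printing Implicit Defensive.
Import Order.TTheory GRing.Theory Num.Theory.
Local Open Scope ring_scope.

Definition is_norm (R : realType) (d : nat) (N : 'rV[R]_d -> R) : Prop :=
  [/\ forall x, 0 <= N x,
      forall x, N x = 0 -> x = 0,
      forall (a : R) x, N (a *: x) = `|a| * N x
    & forall x y, N (x + y) <= N x + N y].

(* B_i^n = prod_{j=i}^n beta_j  (empty product = 1 when i > n). *)
Definition Bprod (R : realType) (beta : nat -> R) (i n : nat) : R :=
  \prod_(i <= j < n.+1) beta j.

(* Main.v *)
Require Import Defs.
From HB Require Import structures.
From mathcomp Require Import all_boot all_order all_algebra.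
From mathcomp Require Import reals.
Import Order.TTheory GRing.Theory Num.Theory.
Local Open Scope ring_scope.

Lemma vec_id (R : realType) (V : lmodType R) (b : R) (x0 t u s : V) :
  (1 - b) *: x0 + b *: (t + u) - s = (1 - b) *: (x0 - s) + b *: ((t - s) + u).
Proof.
rewrite [(1-b) *: (x0 - s)]scalerDr !scalerDr !scalerBl !scale1r !scalerN.
set B := b *: x0; set C := b *: t; set D := b *: u; set F := b *: s.
rewrite -!addrA; congr (_ + _); congr (_ + _).
rewrite opprK (addrCA F) addNKr [RHS]addrC !addrA //.
Qed.
From mathcomp Require Import ring lra.

Lemma S_rec (R : realType) (beta : nat -> R) (gamma : R) (c : nat -> R) n :
  \sum_(0 <= i < n.+2) gamma ^+ (n.+1 - i) * Bprod beta i.+1 n.+1 * c i =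
  c n.+1 + beta n.+1 * gamma *
     \sum_(0 <= i < n.+1) gamma ^+ (n - i) * Bprod beta i.+1 n * c i.
Proof.
rewrite big_nat_recr //= subnn expr0 /Bprod (@big_geq _ _ _ n.+2 n.+2) // !mul1r addrC.
congr (_ + _); rewrite big_distrr /=.
apply: eq_big_nat => i /andP[_ hi].
rewrite subSn // exprS big_nat_recr //=; ring.
Qed.

Theorem proposition2 (R : realType) (d : nat) (N : 'rV[R]_d -> R)
  (T : 'rV[R]_d -> 'rV[R]_d) (gamma : R) (xstar : 'rV[R]_d)
  (beta : nat -> R) (x0 : 'rV[R]_d) (U : nat -> 'rV[R]_d)
  (x : nat -> 'rV[R]_d) :
  is_norm N ->
  0 < gamma < 1 ->
  (forall y z, N (T y - T z) <= gamma * N (y - z)) ->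
  T xstar = xstar ->
  (forall y, T y = y -> y = xstar) ->
  beta 0%N = 0 ->
  (forall n, (1 <= n)%N -> 0 < beta n < 1) ->
  (forall n m, (1 <= n)%N -> (n <= m)%N -> beta n <= beta m) ->
  x 0%N = x0 ->
  (forall n, (1 <= n)%N ->
     x n = (1 - beta n) *: x0 + beta n *: (T (x n.-1) + U n)) ->
  forall n, (1 <= n)%N ->
    N (x n - xstar) <=
      \sum_(0 <= i < n.+1)
         gamma ^+ (n - i) * Bprod beta i.+1 n *
           ((1 - beta i) * N (x0 - xstar) + beta i * N (U i)).
Proof.
move=> [N0 _ NZ ND] /andP[g0 g1] HT Tx _ b0 hb _ hx0 hx n _.
set c := fun i => (1 - beta i) * N (x0 - xstar) + beta i * N (U i).
rewrite -/(c _).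
elim: n => [|n IH].
  rewrite big_nat1 subnn expr0 /Bprod (@big_geq _ _ _ 1%N 1%N) // !mul1r /c b0 subr0 mul0r addr0 mul1r hx0.
  exact: lexx.
rewrite S_rec hx // /= -{1}Tx vec_id.
have /andP[bp b1] := hb n.+1 isT.
apply: le_trans (ND _ _) _.
rewrite !NZ (ger0_norm (ltW bp)) ger0_norm; last by lra.
apply: le_trans (lerD (lexx _) (ler_wpM2l (ltW bp) (ND _ _))) _.
have h1 := HT (x n) xstar.
have h2 : gamma * N (x n - xstar) <= gamma * (\sum_(0 <= i < n.+1) gamma ^+ (n - i) * Bprod beta i.+1 n * c i).
  by apply: ler_wpM2l => //; exact: ltW.
rewrite {1}Tx.
set S := \sum_(0 <= i < n.+1) _.
have h3 : beta n.+1 * N (T (x n) - T xstar) <= beta n.+1 * (gamma * S).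
  apply: ler_wpM2l; [exact: ltW| exact: le_trans h1 h2].
rewrite -/(c n.+1) /c; lra.
Qed.
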